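(* Let $X$ be a finite set, let $\mathcal{F}$ be a closure system on $X$, let $\Sigma$ be the canonical direct basis of $\mathcal{F}$, and let $A\subseteq X$. Let $\mathcal{F}(A)=\mathcal{F}\cup\{F\cap A:F\in\mathcal{F}\}$. Then the modified body-building formula $\Sigma^*(A)$ is the canonical direct basis of the closure system $\mathcal{F}(A)$.
   Context: An implication on $X$ is $C\rightarrow d$ with $C\subseteq X$, $d\in X$; a set $Y$ satisfies it if $C\not\subseteq Y$ or $d\in Y$, otherwise it fails on $Y$. A set $\Sigma$ of implications is a basis of a closure system $\mathcal{F}$ if $\mathcal{F}$ is exactly the family of subsets of $X$ satisfying all implications of $\Sigma$. With $\varphi$ the closure operator of $\mathcal{F}$ ($\varphi(Y)$ = smallest member of $\mathcal{F}$ containing $Y$), the canonical direct basis of $\mathcal{F}$ is the set of all implications $C\rightarrow d$ such that $d\notin C$, $d\in\varphi(C)$, and $d\notin\varphi(C')$ for every proper subset $C'\subsetneq C$. Modified body-building formula: $\Sigma_t(A)$ is the set of implications of $\Sigma$ holding on $A$ and $\Sigma_f(A)$ the set of those failing on $A$ ($C\subseteq A$, $d\notin A$). For $(C\rightarrow d)\in\Sigma$ let $E_C=\{x\in X: \{x\}=G\setminus C \text{ for some implication } (G\rightarrow d)\in\Sigma\}$ (implications with the same consequent $d$). For $\sigma=(C\rightarrow d)\in\Sigma_f(A)$ let $\sigma^*(A)=\{C\cup\{x\}\rightarrow d: x\in X\setminus(A\cup\{d\}\cup E_C)\}$, and $\Sigma^*(A)=\Sigma_t(A)\cup\bigcup_{\sigma\in\Sigma_f(A)}\sigma^*(A)$.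 *)

(* Defs.v *)
From mathcomp Require Import all_boot.
Set Implicit Arguments. Unset Strict Implicit. Unset Printing Implicit Defensive.

Section ImplDefs.
Variable T : finType.

Definition impl := ({set T} * T)%type.

Definition satisfies (Y : {set T}) (s : impl) : bool := ~~ (s.1 \subset Y) || (s.2 \in Y).

(* Closure system on T: contains T and is closed under intersection
   (for a finite T this gives closure under arbitrary intersections). *)
Definition closure_system (F : {set {set T}}) : Prop :=
  setT \in F /\ forall Y Z, Y \in F -> Z \in F -> Y :&: Z \in F.

Definition is_basis (Sigma : {set impl}) (F : {set {set T}}) : Prop :=
  forall Y : {set T}, (Y \in F) = [forall s in Sigma, satisfies Y s].

Definition phi (F : {set {set T}}) (Y : {set T}) : {set T} :=
  \bigcap_(Z in F | Y \subset Z) Z.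

Definition cdb (F : {set {set T}}) : {set impl} :=
  [set s : impl | [&& s.2 \notin s.1, s.2 \in phi F s.1 &
     [forall C' : {set T}, (C' \proper s.1) ==> (s.2 \notin phi F C')]]].

Definition Sigma_t (Sigma : {set impl}) (A : {set T}) : {set impl} :=
  [set s in Sigma | satisfies A s].
Definition Sigma_f (Sigma : {set impl}) (A : {set T}) : {set impl} :=
  [set s in Sigma | ~~ satisfies A s].

Definition E_C (Sigma : {set impl}) (C : {set T}) (d : T) : {set T} :=
  [set x : T | [exists G : {set T}, ((G, d) \in Sigma) && (G :\: C == [set x])]].

Definition sigma_star (Sigma : {set impl}) (A : {set T}) (s : impl) : {set impl} :=
  [set ((s.1 :|: [set x]), s.2) | x in ~: (A :|: [set s.2] :|: E_C Sigma s.1 s.2)].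

Definition Sigma_star (Sigma : {set impl}) (A : {set T}) : {set impl} :=
  Sigma_t Sigma A :|: \bigcup_(s in Sigma_f Sigma A) sigma_star Sigma A s.

Definition FA (F : {set {set T}}) (A : {set T}) : {set {set T}} :=
  F :|: [set Z :&: A | Z in F].

End ImplDefs.

(* Main.v *)
Require Import Defs.
From mathcomp Require Import all_boot.
Set Implicit Arguments. Unset Strict Implicit. Unset Printing Implicit Defensive.

Section Aux.
Variable T : finType.
Implicit Types (F : {set {set T}}) (Y C D : {set T}).

Lemma phiP F Y x :
  reflect (forall Z, Z \in F -> Y \subset Z -> x \in Z) (x \in phi F Y).
Proof.
apply: (iffP bigcapP) => H Z.
- by move=> hZ hY; apply: H; rewrite hZ hY.
- by move=> /andP [hZ hY]; apply: H.
Qed.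

Lemma phi_mono F Y Y' x : Y \subset Y' -> x \in phi F Y -> x \in phi F Y'.
Proof.
move=> hs /phiP H; apply/phiP => Z hZ hY'; apply: H => //.
exact: subset_trans hs hY'.
Qed.

Lemma phiFA F A Y x : setT \in F ->
  (x \in phi (FA F A) Y) = (x \in phi F Y) && ((Y \subset A) ==> (x \in A)).
Proof.
move=> hT; apply/idP/idP.
- move/phiP => H; apply/andP; split.
  + apply/phiP => Z hZ hY; apply: (H Z) hY; by rewrite /FA in_setU hZ.
  + apply/implyP => hYA.
    have hA : A \in FA F A.
      rewrite /FA in_setU; apply/orP; right.
      by apply/imsetP; exists setT => //; rewrite setTI.
    exact: H hA hYA.
- move=> /andP [/phiP H1 H2]; apply/phiP => Z.
  rewrite /FA in_setU => /orP [hZ hY|]; first exact: H1.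
  move=> /imsetP [W hW ->] hY.
  have hYA : Y \subset A by apply: subset_trans hY (subsetIr _ _).
  have hYW : Y \subset W by apply: subset_trans hY (subsetIl _ _).
  by rewrite inE (H1 W hW hYW) (implyP H2 hYA).
Qed.

Lemma cdbP F C d :
  reflect [/\ d \notin C, d \in phi F C &
           forall C', C' \proper C -> d \notin phi F C'] ((C, d) \in cdb F).
Proof.
rewrite inE /=; apply: (iffP and3P) => [[h1 h2 /forallP h3]|[h1 h2 h3]]; split => //.
- by move=> C' hC'; exact: (implyP (h3 C') hC').
- by apply/forallP => C'; apply/implyP; exact: h3.
Qed.

Lemma exists_min F C' d : d \in phi F C' -> d \notin C' ->
  exists2 C : {set T}, C \subset C' & (C, d) \in cdb F.
Proof.
move: {2}#|C'| (leqnn #|C'|) => n; elim: n C' => [|n IH] C' hn h1 h2.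
  case: (boolP [forall C'' : {set T}, (C'' \proper C') ==> (d \notin phi F C'')]) => H.
    exists C' => //; apply/cdbP; split => // C'' hp; exact: (implyP (forallP H C'') hp).
  move/forallPn: H => [C'']; rewrite negb_imply negbK => /andP [hp hd].
  by have := proper_card hp; rewrite leqn0 in hn; rewrite (eqP hn).
case: (boolP [forall C'' : {set T}, (C'' \proper C') ==> (d \notin phi F C'')]) => H.
  exists C' => //; apply/cdbP; split => // C'' hp; exact: (implyP (forallP H C'') hp).
move/forallPn: H => [C'']; rewrite negb_imply negbK => /andP [hp hd].
have hs := proper_sub hp.
have hc := proper_card hp.
case: (IH C'' _ hd) => [| |C hC hcdb].
- by rewrite -ltnS; apply: leq_trans hc hn.
- by apply/negP => /(subsetP hs); apply/negP.
- by exists C => //; apply: subset_trans hC hs.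
Qed.

End Aux.

Theorem mainTheorem2 (T : finType) (F : {set {set T}}) (A : {set T}) :
  closure_system F ->
  Sigma_star (cdb F) A = cdb (FA F A).
Proof.
move=> [hT _]; apply/setP => [[D d]]; apply/idP/idP.
- rewrite /Sigma_star in_setU => /orP [].
  + rewrite /Sigma_t inE => /andP [/cdbP [h1 h2 h3] hsat].
    apply/cdbP; split => //.
    * rewrite phiFA // h2 /=; apply/implyP => hDA.
      by move: hsat; rewrite /satisfies /= hDA.
    * by move=> C' hp; rewrite phiFA // negb_and (h3 _ hp).
  + move/bigcupP => [[C d0] hf /imsetP [x hx [ED Ed]]]; subst D d.
    move: hf; rewrite inE => /andP [/cdbP [h1 h2 h3] hns].
    move: hns; rewrite /satisfies /= negb_or negbK => /andP [hCA hd0A].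
    move: hx; rewrite in_setC !in_setU in_set1 !negb_or /= => /andP [/andP [hxA hxd] hxE].
    have hxC : x \notin C by apply/negP => /(subsetP hCA); apply/negP.
    apply/cdbP; split.
    * by rewrite in_setU in_set1 negb_or h1 eq_sym hxd.
    * rewrite phiFA //; apply/andP; split; first exact: phi_mono (subsetUl _ _) h2.
      apply/implyP => hs; move: hxA; rewrite (subsetP hs) //.
      by rewrite in_setU in_set1 eqxx orbT.
    * move=> C'' hp; rewrite phiFA // negb_and.
      have hs := proper_sub hp.
      case: (boolP (x \in C'')) => hxC''.
      -- apply/orP; left; apply/negP => hd.
         have hd0C'' : d0 \notin C''.
           apply/negP => /(subsetP hs); rewrite in_setU in_set1 (negbTE h1) /=.
           by rewrite eq_sym (negbTE hxd).
         have [G hG hGc] := exists_min hd hd0C''.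
         case: (boolP (x \in G)) => hxG.
         ++ move: hxE; rewrite /E_C inE => /existsPn /(_ G); rewrite hGc /=.
            move/negP; apply; apply/eqP/setP => y; rewrite !inE.
            case: (boolP (y == x)) => [/eqP -> | hyx]; first by rewrite hxC hxG.
            apply/negP => /andP [hyC hyG].
            move: (subsetP hs y (subsetP hG y hyG)); rewrite in_setU in_set1.
            by rewrite (negbTE hyC) (negbTE hyx).
         ++ have hGC : G \proper C.
              rewrite properE; apply/andP; split.
                apply/subsetP => y hyG.
                move: (subsetP hs y (subsetP hG y hyG)); rewrite in_setU in_set1.
                case/orP => // /eqP hyx; by move: hxG; rewrite -hyx hyG.
              apply/negP => hCG.
              move: hp; rewrite properE => /andP [_ /negP]; apply.
              apply/subsetP => y; rewrite in_setU in_set1 => /orP [hy|/eqP ->] //.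
              exact: subsetP hG y (subsetP hCG y hy).
            move/cdbP: hGc => [_ hdG _].
            by move: (h3 G hGC); rewrite hdG.
      -- apply/orP; right.
         have hC''C : C'' \subset C.
           apply/subsetP => y hy; move: (subsetP hs y hy); rewrite in_setU in_set1.
           case/orP => // /eqP hyx; by move: hxC''; rewrite -hyx hy.
         by rewrite (subset_trans hC''C hCA) /= hd0A.
- move/cdbP => [h1 h2 h3].
  have h3' : forall Y : {set T}, Y \proper D -> ~~ (Y \subset A) -> d \notin phi F Y.
    move=> Y hY hYA; move: (h3 Y hY); rewrite phiFA // (negbTE hYA) /= andbT //.
  move: h2; rewrite phiFA // => /andP [h2 h2A].
  case: (boolP ((D, d) \in cdb F)) => hD.
    rewrite /Sigma_star in_setU; apply/orP; left.
    rewrite /Sigma_t inE hD /= /satisfies /=.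
    by case: (boolP (D \subset A)) => //= hDA; rewrite (implyP h2A hDA).
  have hD' := hD; rewrite inE /= h1 h2 /= in hD'.
  move/forallPn: hD' => [C']; rewrite negb_imply negbK => /andP [hpC' hdC'].
  have hC'A : C' \subset A.
    by apply/negPn/negP => h; move: (h3' C' hpC' h); rewrite hdC'.
  have hdA : d \notin A.
    by move: (h3 C' hpC'); rewrite phiFA // hdC' hC'A.
  have hDA : ~~ (D \subset A).
    by apply/negP => hDA; move: hdA; rewrite (implyP h2A hDA).
  have hd'C' : d \notin C'.
    by apply/negP => /(subsetP (proper_sub hpC')); apply/negP.
  have [C hCC' hC] := exists_min hdC' hd'C'.
  have hCD : C \subset D := subset_trans hCC' (proper_sub hpC').
  have hCA : C \subset A := subset_trans hCC' hC'A.
  move/subsetPn: hDA => [x hxD hxA].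
  have hxnA : ~~ (C :|: [set x] \subset A).
    apply/negP => /subsetP /(_ x); rewrite in_setU in_set1 eqxx orbT => /(_ isT).
    by apply/negP.
  have hCxD : C :|: [set x] \subset D.
    by rewrite subUset hCD sub1set hxD.
  have eD : C :|: [set x] = D.
    apply/eqP; apply/negPn/negP => hne.
    have hp : C :|: [set x] \proper D by rewrite properEneq hne hCxD.
    move/cdbP: (hC) => [_ hdC _].
    by move: (h3' _ hp hxnA); rewrite (phi_mono (subsetUl _ _) hdC).
  rewrite /Sigma_star in_setU; apply/orP; right.
  apply/bigcupP; exists (C, d).
    by rewrite inE hC /satisfies /= hCA hdA.
  apply/imsetP; exists x; last by rewrite /= eD.
  rewrite in_setC !in_setU in_set1 !negb_or (negbTE hxA) /=.
  apply/andP; split.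
    by apply/negP => /eqP hxd; move: h1; rewrite -hxd hxD.
  rewrite /E_C inE; apply/existsPn => G; apply/negP => /andP [hG /eqP hGC].
  have hxG : x \in G.
    by have := set11 x; rewrite -hGC inE => /andP [].
  have hGD : G \subset D.
    rewrite -eD; apply/subsetP => y hy; rewrite in_setU.
    case: (boolP (y \in C)) => //= hyC.
    by rewrite -hGC inE hyC hy.
  case: (boolP (G == D)) => [/eqP hGeq|hne].
    by move: hD; rewrite -hGeq hG.
  have hp : G \proper D by rewrite properEneq hne hGD.
  have hGA : ~~ (G \subset A).
    by apply/negP => /subsetP /(_ x hxG); apply/negP.
  move/cdbP: hG => [_ hdG _].
  by move: (h3' G hp hGA); rewrite hdG.
Qed.
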